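(* Every flexible C-loop is an ARIF loop, i.e. it satisfies $(zx)(yxy)=(z(xyx))y$ for all $x,y,z$.
   Context: A C-loop is a loop satisfying $x(y(yz))=((xy)y)z$ for all $x,y,z$. A loop is flexible if $(xy)x=x(yx)$ for all $x,y$ (so expressions such as $xyx$ are unambiguous). An ARIF loop is a flexible loop satisfying $(zx)(yxy)=(z(xyx))y$ for all $x,y,z$. *)

(* Defs.v *)
Definition is_loop {L : Type} (mul : L -> L -> L) (e : L) : Prop :=
  (forall x, mul e x = x /\ mul x e = x) /\
  (forall a b : L, exists x, mul a x = b /\ forall x', mul a x' = b -> x' = x) /\
  (forall a b : L, exists y, mul y a = b /\ forall y', mul y' a = b -> y' = y).

Definition is_C_loop {L : Type} (mul : L -> L -> L) (e : L) : Prop :=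
  is_loop mul e /\
  forall x y z, mul x (mul y (mul y z)) = mul (mul (mul x y) y) z.

Definition is_flexible {L : Type} (mul : L -> L -> L) (e : L) : Prop :=
  is_loop mul e /\ forall x y, mul (mul x y) x = mul x (mul y x).

(* ARIF loop: flexible loop with (zx)(yxy) = (z(xyx))y;
   xyx denotes (xy)x, unambiguous by flexibility. *)
Definition is_ARIF_loop {L : Type} (mul : L -> L -> L) (e : L) : Prop :=
  is_flexible mul e /\
  forall x y z, mul (mul z x) (mul (mul y x) y) = mul (mul z (mul (mul x y) x)) y.

(* Main.v *)
Require Import Defs.
From Stdlib Require Import ClassicalEpsilon.

Theorem lemma4p3 (L : Type) (mul : L -> L -> L) (e : L) :
  is_C_loop mul e -> is_flexible mul e -> is_ARIF_loop mul e.
Proof.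
  intros [[Hid [Hl Hr]] HC] [HL Hflex].
  split; [split; [exact HL | exact Hflex] |].
  assert (Hel : forall x, mul e x = x) by (intro a; apply Hid).
  assert (Her : forall x, mul x e = x) by (intro a; apply Hid).
  pose (inv := fun a => proj1_sig (constructive_indefinite_description _ (Hl a e))).
  assert (Hinv : forall a, mul a (inv a) = e).
  { intro a; unfold inv; exact (proj1 (proj2_sig (constructive_indefinite_description _ (Hl a e)))). }
  clearbody inv.
  assert (RIP : forall u y, mul (mul u y) (inv y) = u).
  { intros u y. destruct (Hr y u) as [x [Hx _]]. subst u.
    rewrite <- HC, Hinv, !Her. reflexivity. }
  assert (LIP : forall y w, mul (inv y) (mul y w) = w).
  { intros y w. destruct (Hr y e) as [l [Hly _]].
    assert (H1 : forall w, mul l (mul y w) = w).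
    { intro w'. destruct (Hl y w') as [z [Hz _]]. subst w'.
      rewrite HC, Hly, Hel. reflexivity. }
    assert (Hl' : l = inv y).
    { specialize (H1 (inv y)). rewrite Hinv, Her in H1. exact H1. }
    subst l. apply H1. }
  assert (Hinvl : forall a, mul (inv a) a = e).
  { intro a. rewrite <- (Her a) at 2. rewrite LIP. reflexivity. }
  assert (invinv : forall a, inv (inv a) = a).
  { intro a. rewrite <- (Her (inv (inv a))), <- (Hinvl a), LIP. reflexivity. }
  assert (RIP' : forall u y, mul (mul u (inv y)) y = u).
  { intros u y. rewrite <- (invinv y) at 2. apply RIP. }
  assert (LIP' : forall y w, mul y (mul (inv y) w) = w).
  { intros y w. rewrite <- (invinv y) at 1. apply LIP. }
  assert (anti : forall x y, inv (mul x y) = mul (inv y) (inv x)).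
  { intros x y. set (u := mul x y).
    assert (Hx : mul u (inv y) = x) by (unfold u; apply RIP).
    assert (H2 : mul (inv u) x = inv y) by (rewrite <- Hx; apply LIP).
    rewrite <- H2, RIP. reflexivity. }
  assert (solveL : forall u v w, mul u v = w -> v = mul (inv u) w).
  { intros u v w H. subst w. rewrite LIP. reflexivity. }
  assert (solveR : forall u v w, mul u v = w -> u = mul w (inv v)).
  { intros u v w H. subst w. rewrite RIP. reflexivity. }
  assert (Msq : forall a y b, mul (mul a (mul y y)) b = mul a (mul (mul y y) b)).
  { intros a y b.
    assert (LAP : forall z, mul y (mul y z) = mul (mul y y) z).
    { intro z. rewrite <- (Hel (mul y (mul y z))), HC, Hel. reflexivity. }
    assert (RAP : mul (mul a y) y = mul a (mul y y)).
    { rewrite <- (Her (mul (mul a y) y)), <- HC, Her. reflexivity. }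
    rewrite <- LAP, HC, RAP. reflexivity. }
  assert (Minv : forall s, (forall a b, mul (mul a s) b = mul a (mul s b)) ->
                 forall a b, mul (mul a (inv s)) b = mul a (mul (inv s) b)).
  { intros s Ms a b.
    assert (Hb : b = mul s (mul (inv s) b)).
    { rewrite LIP'. reflexivity. }
    rewrite Hb at 1. rewrite <- Ms, RIP'. reflexivity. }
  assert (Lnuc : forall s, (forall a b, mul (mul a s) b = mul a (mul s b)) ->
                 forall c w, mul s (mul c w) = mul (mul s c) w).
  { intros s Ms c w.
    pose proof (Minv s Ms) as Ms'.
    set (a := inv c).
    assert (H : mul (mul a (inv s)) (mul s (mul c w)) = w).
    { rewrite Ms'. rewrite LIP.
      unfold a. rewrite LIP. reflexivity. }
    apply solveL in H. rewrite H, anti, invinv. unfold a. rewrite invinv. reflexivity. }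
  assert (Rnuc : forall s, (forall a b, mul (mul a s) b = mul a (mul s b)) ->
                 forall w y, mul (mul w y) s = mul w (mul y s)).
  { intros s Ms w y.
    set (a := inv y).
    assert (H : mul (mul (mul w y) s) (mul (inv s) a) = w).
    { rewrite Ms. rewrite LIP'.
      unfold a. rewrite RIP. reflexivity. }
    apply solveR in H. rewrite H, anti, invinv. unfold a. rewrite invinv. reflexivity. }
  intros x y z.
  set (p := mul (mul x y) (mul x y)).
  assert (Mp : forall a b, mul (mul a p) b = mul a (mul p b)) by (intros; apply Msq).
  pose proof (Lnuc p Mp) as Lp. pose proof (Rnuc p Mp) as Rp.
  assert (E1 : mul x y = mul (mul (inv y) (inv x)) p).
  { unfold p. rewrite <- anti, LIP. reflexivity. }
  assert (E2 : mul x y = mul p (mul (inv y) (inv x))).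
  { unfold p. rewrite <- anti, RIP. reflexivity. }
  assert (Yyi : forall u, mul y (mul (inv y) u) = u).
  { intro u. rewrite <- (invinv y) at 1. apply LIP. }
  assert (Xxi : forall u, mul (mul u (inv x)) x = u).
  { intro u. rewrite <- (invinv x) at 2. apply RIP. }
  assert (Yxy : mul (mul y x) y = mul (inv x) p).
  { rewrite Hflex, E1, <- Rp, Yyi. reflexivity. }
  assert (Xyx : mul (mul x y) x = mul p (inv y)).
  { rewrite E2, Lp, Xxi. reflexivity. }
  rewrite Yxy, Xyx, <- Rp, <- Mp, RIP, RIP'. reflexivity.
Qed.
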